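(* Let $\zeta$ be the Riemann zeta function. For every non-negative integer $n$, $$\lim_{x\to 0^+}\frac{2\ln(n!\,x)+\ln|\Gamma(-n-x)|+\ln|\Gamma(-n+x)|}{x^2}=\zeta(2)+\sum_{k=1}^n\frac{1}{k^2}.$$
   Context: $\Gamma$ is Euler's Gamma function on the real line. *)

(* Defs.v *)
From Stdlib Require Import Reals Factorial.
From Coquelicot Require Import Coquelicot.
Open Scope R_scope.

Fixpoint gauss_prod (x : R) (m : nat) : R :=
  match m with
  | O => x
  | S m' => gauss_prod x m' * (x + INR m)
  end.

(* Euler's Gamma function on the real line, via the Euler--Gauss limit
   Gamma(x) = lim_{m -> oo} m! m^x / (x (x+1) ... (x+m)),
   valid for every real x that is not a non-positive integer. *)
Definition Gamma (x : R) : R :=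
  real (Lim_seq (fun m => INR (Factorial.fact m) * exp (x * ln (INR m)) / gauss_prod x m)).

Definition zeta2 : R := Series (fun k => / (INR (S k)) ^ 2).

Definition partial_zeta2 (n : nat) : R := sum_n_m (fun k => / (INR k) ^ 2) 1 n.

(* Main.v *)
Require Import Defs.
From Stdlib Require Import Reals Factorial Lra Lia.
From Coquelicot Require Import Coquelicot.
Open Scope R_scope.

Lemma ln_le_sub1 z : 0 < z -> ln z <= z - 1.
Proof.
  intros Hz. rewrite <- (ln_exp (z - 1)).
  apply ln_le; [exact Hz|]. pose proof (exp_ineq1_le (z-1)). lra.
Qed.

Lemma ln1p_up t : -1 < t -> ln (1 + t) <= t.
Proof. intros; pose proof (ln_le_sub1 (1+t)); lra. Qed.

Lemma ln1p_low t : -1 < t -> t / (1 + t) <= ln (1 + t).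
Proof.
  intros H. assert (H1 : 0 < 1 + t) by lra.
  pose proof (ln_le_sub1 (/(1+t)) (Rinv_0_lt_compat _ H1)) as H2.
  rewrite ln_Rinv in H2 by lra.
  replace (t / (1+t)) with (1 - /(1+t)) by (field; lra). lra.
Qed.

Lemma cont_ln x : 0 < x -> continuity_pt ln x.
Proof. intros H. apply derivable_continuous_pt. exists (/x). now apply derivable_pt_lim_ln. Qed.

Lemma cont_exp x : continuity_pt exp x.
Proof. apply derivable_continuous_pt. apply derivable_pt_exp. Qed.

Lemma lim_inv_S : is_lim_seq (fun m => / INR (S m)) 0.
Proof.
  pose proof (is_lim_seq_inv _ _ is_lim_seq_INR) as H.
  simpl in H. apply (is_lim_seq_incr_1 (fun m => / INR m)). apply H. discriminate.
Qed.

Lemma lim_1c c : is_lim_seq (fun m => 1 + c * / INR (S m)) 1.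
Proof.
  pose proof (is_lim_seq_plus' _ _ 1 (c*0) (is_lim_seq_const 1)
     (is_lim_seq_scal_l _ c 0 lim_inv_S)) as H.
  rewrite Rmult_0_r, Rplus_0_r in H. exact H.
Qed.

Definition a (y : R) (m : nat) : R :=
  INR (Factorial.fact m) * exp (y * ln (INR m)) / gauss_prod y m.

Fixpoint Zs (m : nat) : R :=
  match m with O => 0 | S m' => Zs m' + / (INR m) ^ 2 end.

Lemma div_le_div a b c d : 0 < b -> 0 < d -> a * d <= c * b -> a / b <= c / d.
Proof.
  intros Hb Hd H.
  replace (a/b) with ((a*d) * / (b*d)) by (field; lra).
  replace (c/d) with ((c*b) * / (b*d)) by (field; lra).
  apply Rmult_le_compat_r; [|exact H].
  left; apply Rinv_0_lt_compat; nra.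
Qed.

Lemma INR_S_pos m : 0 < INR (S m).
Proof. apply lt_0_INR; lia. Qed.

Lemma INR_S_ge1 m : 1 <= INR (S m).
Proof. rewrite S_INR; pose proof (pos_INR m); lra. Qed.

Lemma Zs_nonneg m : 0 <= Zs m.
Proof.
  induction m; [simpl; lra|]. change (Zs (S m)) with (Zs m + / INR (S m) ^ 2).
  pose proof (INR_S_pos m). assert (0 < / INR (S m) ^ 2) by (apply Rinv_0_lt_compat, pow_lt; lra). lra.
Qed.

Lemma Zs_bound_S m : Zs (S m) <= 2 - / INR (S m).
Proof.
  induction m.
  - simpl. lra.
  - change (Zs (S (S m))) with (Zs (S m) + / INR (S (S m)) ^ 2).
    assert (H : / INR (S (S m)) ^ 2 <= / INR (S m) - / INR (S (S m))).
    { rewrite (S_INR (S m)). set (K := INR (S m)).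
      assert (1 <= K) by apply INR_S_ge1.
      replace (/ K - / (K + 1)) with (/ (K * (K+1))) by (field; lra).
      apply Rinv_le_contravar; nra. }
    lra.
Qed.

Lemma Zs_le2 m : Zs m <= 2.
Proof.
  destruct m. simpl; lra.
  pose proof (Zs_bound_S m). pose proof (INR_S_pos m).
  assert (0 < / INR (S m)) by (apply Rinv_0_lt_compat; lra). lra.
Qed.

Lemma gp_pos y m : 0 < y -> 0 < gauss_prod y m.
Proof.
  intros Hy; induction m; [exact Hy|].
  change (gauss_prod y (S m)) with (gauss_prod y m * (y + INR (S m))).
  pose proof (pos_INR (S m)). apply Rmult_lt_0_compat; lra.
Qed.

Lemma a_pos y m : 0 < y -> 0 < a y m.
Proof.
  intros Hy. unfold a. unfold Rdiv.
  apply Rmult_lt_0_compat; [apply Rmult_lt_0_compat|].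
  - apply lt_0_INR, lt_O_fact.
  - apply exp_pos.
  - apply Rinv_0_lt_compat, gp_pos, Hy.
Qed.

Lemma a_rec y k : 0 < y ->
  a y (S k) = a y k * (INR (S k) * exp (y * (ln (INR (S k)) - ln (INR k))) / (y + INR (S k))).
Proof.
  intros Hy. unfold a.
  change (Factorial.fact (S k)) with (S k * Factorial.fact k)%nat.
  change (gauss_prod y (S k)) with (gauss_prod y k * (y + INR (S k))).
  rewrite mult_INR.
  replace (y * ln (INR (S k))) with (y * ln (INR k) + y * (ln (INR (S k)) - ln (INR k))) by ring.
  rewrite exp_plus.
  pose proof (gp_pos y k Hy). pose proof (pos_INR (S k)).
  field; lra.
Qed.

Lemma step_bounds y (K : R) : 0 < y <= 1 -> 1 <= K ->
  0 <= ln ((K+1) * exp (y * (ln (K+1) - ln K)) / (y + (K+1)))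
  <= 2 * / K ^ 2.
Proof.
  intros Hy HK.
  rewrite ln_div by (try apply Rmult_lt_0_compat; try apply exp_pos; lra).
  rewrite ln_mult by (try apply exp_pos; lra).
  rewrite ln_exp.
  assert (EA : ln (K+1) - ln K = ln (1 + / K)).
  { rewrite <- ln_div by lra. f_equal. field. lra. }
  assert (EB : ln (y + (K+1)) - ln (K+1) = ln (1 + y / (K+1))).
  { rewrite <- ln_div by lra. f_equal. field. lra. }
  assert (HK0 : 0 < / K) by (apply Rinv_0_lt_compat; lra).
  assert (A1 := ln1p_up (/K) ltac:(lra)).
  assert (A2 := ln1p_low (/K) ltac:(lra)).
  assert (HKy : 0 <= y / (K+1)) by (apply Rdiv_le_0_compat; lra).
  assert (B1 := ln1p_up (y/(K+1)) ltac:(lra)).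
  assert (B2 := ln1p_low (y/(K+1)) ltac:(lra)).
  replace (/ K / (1 + / K)) with (/ (K+1)) in A2 by (field; lra).
  replace (y / (K + 1) / (1 + y / (K + 1))) with (y / (K + 1 + y)) in B2 by (field; lra).
  rewrite EA.
  split.
  - assert (y * / (K+1) <= y * ln (1 + / K)) by (apply Rmult_le_compat_l; lra).
    unfold Rdiv in B1. nra.
  - assert (y * ln (1 + / K) <= y * / K) by (apply Rmult_le_compat_l; lra).
    assert (H3 : y * / K - y / (K + 1 + y) <= 2 * / K ^ 2).
    { replace (y * / K - y / (K + 1 + y)) with ((y * (1+y)) / (K * (K+1+y))) by (field; lra).
      replace (2 * / K ^ 2) with (2 / (K*K)) by (field; lra).
      apply div_le_div; [nra|nra|].
      assert (y * (1+y) <= 2) by nra.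
      assert (K * K <= K * (K+1+y)) by nra.
      assert (0 <= y * (1+y)) by nra.
      apply Rle_trans with (2 * (K*K)). apply Rmult_le_compat_r; nra. nra. }
    lra.
Qed.

Lemma G_lim y : 0 < y <= 1 -> exists g, 0 < g /\ is_lim_seq (a y) g.
Proof.
  intros Hy.
  set (u := fun m => ln (a y (S m))).
  assert (Hstep : forall m, u m <= u (S m) <= u m + 2 * / INR (S m) ^ 2).
  { intros m. unfold u. rewrite (a_rec y (S m)) by lra.
    rewrite ln_mult.
    2: apply a_pos; lra.
    2: { unfold Rdiv. apply Rmult_lt_0_compat. apply Rmult_lt_0_compat. apply INR_S_pos. apply exp_pos.
         apply Rinv_0_lt_compat. pose proof (INR_S_pos (S m)); lra. }
    rewrite (S_INR (S m)).
    pose proof (step_bounds y (INR (S m)) Hy (INR_S_ge1 m)). lra. }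
  assert (Hb : forall m, u m <= u 0%nat + 2 * Zs m).
  { induction m. simpl. lra. change (Zs (S m)) with (Zs m + / INR (S m) ^ 2). pose proof (Hstep m). lra. }
  assert (Hex : ex_finite_lim_seq u).
  { apply ex_finite_lim_seq_incr with (M := u 0%nat + 4).
    - intros n; apply Hstep.
    - intros n. pose proof (Hb n). pose proof (Zs_le2 n). lra. }
  destruct Hex as [l Hl].
  exists (exp l). split. apply exp_pos.
  apply is_lim_seq_incr_1.
  pose proof (is_lim_seq_continuous exp u l (cont_exp l) Hl) as H.
  eapply is_lim_seq_ext; [|exact H].
  intros n. unfold u. apply exp_ln, a_pos; lra.
Qed.

Lemma gp_shift z m : gauss_prod (z+1) m * z = gauss_prod z m * (z + INR (S m)).
Proof.
  induction m.
  - simpl. ring.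
  - change (gauss_prod (z+1) (S m)) with (gauss_prod (z+1) m * (z + 1 + INR (S m))).
    change (gauss_prod z (S m)) with (gauss_prod z m * (z + INR (S m))).
    replace (gauss_prod (z + 1) m * (z + 1 + INR (S m)) * z)
      with (gauss_prod (z + 1) m * z * (z + 1 + INR (S m))) by ring.
    rewrite IHm. rewrite (S_INR (S m)). ring.
Qed.

Lemma gp_nz z m : (forall k, z + INR k <> 0) -> gauss_prod z m <> 0.
Proof.
  intros H; induction m.
  - specialize (H 0%nat). simpl in H. simpl. lra.
  - change (gauss_prod z (S m)) with (gauss_prod z m * (z + INR (S m))).
    apply Rmult_integral_contrapositive_currified; auto.
Qed.

Lemma hyp_shift z : (forall k, z + INR k <> 0) -> (forall k, z + 1 + INR k <> 0).
Proof.
  intros H k. specialize (H (S k)). rewrite S_INR in H. lra.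
Qed.

Lemma a_shift z m : (forall k, z + INR k <> 0) ->
  a z (S m) = a (z+1) (S m) * (/ z * (1 + (z+1) * / INR (S m))).
Proof.
  intros H. unfold a.
  assert (HM := INR_S_pos m).
  replace ((z+1) * ln (INR (S m))) with (z * ln (INR (S m)) + ln (INR (S m))) by ring.
  rewrite exp_plus, exp_ln by exact HM.
  assert (Hz : z <> 0) by (specialize (H 0%nat); simpl in H; lra).
  assert (HQ := gp_nz z (S m) H).
  assert (HN : z + INR (S (S m)) <> 0) by apply H.
  assert (HP : gauss_prod (z+1) (S m) = gauss_prod z (S m) * (z + INR (S (S m))) / z).
  { rewrite <- gp_shift. field. exact Hz. }
  rewrite HP. rewrite (S_INR (S m)) in *.
  field. repeat split; lra.
Qed.

Lemma shift_lim z (L : R) : (forall k, z + INR k <> 0) ->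
  is_lim_seq (a (z+1)) L -> is_lim_seq (a z) (L / z).
Proof.
  intros H HL.
  apply is_lim_seq_incr_1.
  apply is_lim_seq_ext with (fun m => a (z+1) (S m) * (/ z * (1 + (z+1) * / INR (S m)))).
  { intros m. symmetry. apply a_shift, H. }
  replace (L / z) with (L * (/ z * 1)) by (unfold Rdiv; ring).
  apply is_lim_seq_mult'.
  - apply (is_lim_seq_incr_1 (a (z+1))). exact HL.
  - apply (is_lim_seq_scal_l _ (/z) 1 (lim_1c _)).
Qed.

Fixpoint pr (z : R) (n : nat) : R :=
  match n with O => 1 | S n' => z * pr (z+1) n' end.

Lemma pr_nz n : forall z, (forall k, z + INR k <> 0) -> pr z n <> 0.
Proof.
  induction n; intros z H.
  - simpl. lra.
  - change (pr z (S n)) with (z * pr (z+1) n).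
    apply Rmult_integral_contrapositive_currified.
    + specialize (H 0%nat); simpl in H; lra.
    + apply IHn, hyp_shift, H.
Qed.

Lemma iter_lim n : forall z (L : R), (forall k, z + INR k <> 0) ->
  is_lim_seq (a (z + INR n)) L -> is_lim_seq (a z) (L / pr z n).
Proof.
  induction n; intros z L H HL.
  - simpl in *. rewrite Rplus_0_r in HL.
    replace (L / 1) with L by field. exact HL.
  - change (pr z (S n)) with (z * pr (z+1) n).
    assert (H1 := hyp_shift z H).
    assert (HL' : is_lim_seq (a (z + 1 + INR n)) L).
    { replace (z + 1 + INR n) with (z + INR (S n)) by (rewrite S_INR; ring). exact HL. }
    specialize (IHn (z+1) L H1 HL').
    assert (Hz : z <> 0) by (specialize (H 0%nat); simpl in H; lra).
    assert (Hp := pr_nz n (z+1) H1).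
    replace (L / (z * pr (z + 1) n)) with (L / pr (z+1) n / z) by (field; auto).
    apply shift_lim; assumption.
Qed.

Fixpoint Fp (x : R) (m : nat) : R :=
  match m with O => 1 | S m' => Fp x m' * (1 - x ^ 2 / INR m ^ 2) end.

Lemma prod_lemma n x :
  pr (- INR n + x) n * pr (- INR n - x) (S n) = - x * INR (Factorial.fact n) ^ 2 * Fp x n.
Proof.
  induction n.
  - simpl. ring.
  - change (pr (- INR (S n) + x) (S n)) with ((- INR (S n) + x) * pr (- INR (S n) + x + 1) n).
    change (pr (- INR (S n) - x) (S (S n))) with ((- INR (S n) - x) * pr (- INR (S n) - x + 1) (S n)).
    replace (- INR (S n) + x + 1) with (- INR n + x) by (rewrite S_INR; ring).
    replace (- INR (S n) - x + 1) with (- INR n - x) by (rewrite S_INR; ring).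
    change (Fp x (S n)) with (Fp x n * (1 - x ^ 2 / INR (S n) ^ 2)).
    change (Factorial.fact (S n)) with (S n * Factorial.fact n)%nat.
    rewrite mult_INR.
    replace ((- INR (S n) + x) * pr (- INR n + x) n * ((- INR (S n) - x) * pr (- INR n - x) (S n)))
      with ((- INR (S n) + x) * (- INR (S n) - x) * (pr (- INR n + x) n * pr (- INR n - x) (S n))) by ring.
    rewrite IHn.
    assert (HS := INR_S_pos n).
    field. lra.
Qed.

Lemma partial_Zs n : partial_zeta2 n = Zs n.
Proof.
  unfold partial_zeta2. induction n.
  - rewrite sum_n_m_zero by lia. reflexivity.
  - rewrite sum_n_Sm by lia. rewrite IHn. reflexivity.
Qed.

Lemma sum_Zs m : sum_n (fun k => / INR (S k) ^ 2) m = Zs (S m).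
Proof.
  induction m.
  - rewrite sum_O. simpl. ring.
  - rewrite sum_Sn. rewrite IHm. reflexivity.
Qed.

Lemma Zs_lim : is_lim_seq Zs zeta2.
Proof.
  assert (Hex : ex_finite_lim_seq (fun m => Zs (S m))).
  { apply ex_finite_lim_seq_incr with (M := 2).
    - intros n. change (Zs (S (S n))) with (Zs (S n) + / INR (S (S n)) ^ 2).
      assert (0 < / INR (S (S n)) ^ 2) by (apply Rinv_0_lt_compat, pow_lt, INR_S_pos). lra.
    - intros n. apply Zs_le2. }
  destruct Hex as [l Hl].
  assert (Hs : is_series (fun k => / INR (S k) ^ 2) l).
  { unfold is_series. eapply filterlim_ext; [|exact Hl]. intros m. simpl. rewrite sum_Zs. reflexivity. }
  assert (Hz : zeta2 = l) by (apply is_series_unique; exact Hs).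
  rewrite Hz. apply is_lim_seq_incr_1. exact Hl.
Qed.

Lemma zeta2_nonneg : 0 <= zeta2.
Proof.
  assert (H := is_lim_seq_le (fun _ => 0) Zs 0 zeta2 Zs_nonneg (is_lim_seq_const 0) Zs_lim).
  exact H.
Qed.

Lemma t_bounds x m : 0 < x < 1 ->
  0 < x ^ 2 / INR (S m) ^ 2 <= x ^ 2 /\ x ^ 2 < 1.
Proof.
  intros Hx. assert (HK := INR_S_ge1 m).
  assert (H2 : 1 <= INR (S m) ^ 2) by nra.
  split; [split|nra].
  - apply Rdiv_lt_0_compat; nra.
  - unfold Rdiv. rewrite <- (Rmult_1_r (x^2)) at 2.
    apply Rmult_le_compat_l; [nra|].
    rewrite <- Rinv_1. apply Rinv_le_contravar; lra.
Qed.

Lemma Fp_pos x m : 0 < x < 1 -> 0 < Fp x m.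
Proof.
  intros Hx; induction m; [simpl; lra|].
  change (Fp x (S m)) with (Fp x m * (1 - x ^ 2 / INR (S m) ^ 2)).
  destruct (t_bounds x m Hx). apply Rmult_lt_0_compat; lra.
Qed.

Lemma Fp_bounds x m : 0 < x < 1 ->
  x ^ 2 * Zs m <= - ln (Fp x m) <= x ^ 2 / (1 - x ^ 2) * Zs m.
Proof.
  intros Hx; induction m.
  - simpl. rewrite ln_1. lra.
  - change (Fp x (S m)) with (Fp x m * (1 - x ^ 2 / INR (S m) ^ 2)).
    change (Zs (S m)) with (Zs m + / INR (S m) ^ 2).
    destruct (t_bounds x m Hx) as [[Ht1 Ht2] Hx2].
    set (t := x ^ 2 / INR (S m) ^ 2) in *.
    rewrite ln_mult by (try apply Fp_pos; lra).
    assert (U := ln1p_up (-t) ltac:(lra)).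
    assert (L := ln1p_low (-t) ltac:(lra)).
    replace (1 + - t) with (1 - t) in U, L by ring.
    assert (H3 : t / (1 - t) <= t / (1 - x ^ 2)) by (apply div_le_div; [lra|lra|]; apply Rmult_le_compat_l; lra).
    assert (E1 : x ^ 2 * (Zs m + / INR (S m) ^ 2) = x ^ 2 * Zs m + t) by (unfold t; unfold Rdiv; ring).
    assert (E2 : x ^ 2 / (1 - x ^ 2) * (Zs m + / INR (S m) ^ 2) = x ^ 2 / (1 - x ^ 2) * Zs m + t / (1 - x^2))
      by (unfold t; pose proof (INR_S_pos m); field; lra).
    rewrite E1, E2.
    replace (- t / (1 - t)) with (- (t / (1 - t))) in L by (field; lra).
    lra.
Qed.

Lemma gp_prod x m :
  gauss_prod x m * gauss_prod (1 - x) m = x * (INR m + 1 - x) * INR (Factorial.fact m) ^ 2 * Fp x m.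
Proof.
  induction m.
  - simpl. ring.
  - change (gauss_prod x (S m)) with (gauss_prod x m * (x + INR (S m))).
    change (gauss_prod (1-x) (S m)) with (gauss_prod (1-x) m * (1 - x + INR (S m))).
    change (Fp x (S m)) with (Fp x m * (1 - x ^ 2 / INR (S m) ^ 2)).
    change (Factorial.fact (S m)) with (S m * Factorial.fact m)%nat.
    rewrite mult_INR.
    replace (gauss_prod x m * (x + INR (S m)) * (gauss_prod (1 - x) m * (1 - x + INR (S m))))
      with (gauss_prod x m * gauss_prod (1 - x) m * ((x + INR (S m)) * (1 - x + INR (S m)))) by ring.
    rewrite IHm.
    assert (HS := INR_S_pos m).
    rewrite S_INR in *. field. lra.
Qed.

Lemma T_bounds x (g1 g2 : R) : 0 < x < 1 -> is_lim_seq (a x) g1 -> is_lim_seq (a (1-x)) g2 ->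
  0 < g1 -> 0 < g2 ->
  x ^ 2 * zeta2 <= ln (x * g1 * g2) <= x ^ 2 / (1 - x ^ 2) * zeta2.
Proof.
  intros Hx H1 H2 Hg1 Hg2.
  assert (Hprod : is_lim_seq (fun m => x * a x (S m) * a (1-x) (S m)) (x * g1 * g2)).
  { apply is_lim_seq_mult'. apply (is_lim_seq_scal_l _ x g1). apply (is_lim_seq_incr_1 (a x)). exact H1.
    apply (is_lim_seq_incr_1 (a (1-x))). exact H2. }
  assert (Hw := is_lim_seq_continuous ln _ _ (cont_ln (x*g1*g2) ltac:(apply Rmult_lt_0_compat; nra)) Hprod).
  assert (Hr : is_lim_seq (fun m => ln (/ (1 + (1-x) * / INR (S m)))) 0).
  { rewrite <- ln_1. apply is_lim_seq_continuous. apply cont_ln; lra.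
    assert (Hi := is_lim_seq_inv _ 1 (lim_1c (1-x)) ltac:(intros Hc; injection Hc; lra)).
    simpl in Hi. rewrite Rinv_1 in Hi. exact Hi. }
  assert (Heq : forall m, ln (x * a x (S m) * a (1 - x) (S m)) =
      ln (/ (1 + (1-x) * / INR (S m))) + - ln (Fp x (S m))).
  { intros m. unfold a.
    assert (HM := INR_S_pos m).
    assert (HF := Fp_pos x (S m) Hx).
    assert (Hgp := gp_prod x (S m)).
    assert (HG1 := gp_pos x (S m) ltac:(lra)).
    assert (HG2 := gp_pos (1-x) (S m) ltac:(lra)).
    assert (Hf := lt_0_INR _ (lt_O_fact (S m))).
    rewrite <- ln_Rinv by exact HF. rewrite <- ln_mult.
    2: { apply Rinv_0_lt_compat. assert (0 <= (1-x) * / INR (S m)) by (apply Rmult_le_pos; [lra| left; apply Rinv_0_lt_compat; lra]). lra. }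
    2: apply Rinv_0_lt_compat, HF.
    f_equal.
    replace (x * (INR (Factorial.fact (S m)) * exp (x * ln (INR (S m))) / gauss_prod x (S m)) *
       (INR (Factorial.fact (S m)) * exp ((1 - x) * ln (INR (S m))) / gauss_prod (1 - x) (S m)))
      with (x * INR (Factorial.fact (S m)) ^ 2 * exp (x * ln (INR (S m)) + (1 - x) * ln (INR (S m)))
             / (gauss_prod x (S m) * gauss_prod (1 - x) (S m)))
      by (rewrite exp_plus; field; lra).
    replace (x * ln (INR (S m)) + (1 - x) * ln (INR (S m))) with (ln (INR (S m))) by ring.
    rewrite exp_ln by exact HM.
    rewrite Hgp. field. repeat split; try lra.
    }
  assert (HS : is_lim_seq (fun m => - ln (Fp x (S m))) (ln (x * g1 * g2) - 0)).
  { eapply is_lim_seq_ext.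
    2: { apply (is_lim_seq_minus' _ _ _ _ Hw Hr). }
    intros m. cbv beta. rewrite Heq. ring. }
  rewrite Rminus_0_r in HS.
  assert (HZ := Zs_lim). apply is_lim_seq_incr_1 in HZ.
  split.
  - apply (is_lim_seq_le (fun m => x ^ 2 * Zs (S m)) (fun m => - ln (Fp x (S m))) (x ^ 2 * zeta2) (ln (x*g1*g2))).
    intros m; apply Fp_bounds, Hx. apply (is_lim_seq_scal_l _ (x^2) zeta2 HZ). exact HS.
  - apply (is_lim_seq_le (fun m => - ln (Fp x (S m))) (fun m => x ^ 2 / (1 - x^2) * Zs (S m)) (ln (x*g1*g2)) (x ^ 2 / (1 - x^2) * zeta2)).
    intros m; apply Fp_bounds, Hx. exact HS. apply (is_lim_seq_scal_l _ _ zeta2 HZ).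
Qed.

Lemma Gamma_a z : Gamma z = real (Lim_seq (a z)).
Proof. reflexivity. Qed.

Lemma E_bounds n x : 0 < x < 1 ->
  x ^ 2 * (zeta2 + Zs n) <=
  2 * ln (INR (Factorial.fact n) * x) + ln (Rabs (Gamma (- INR n - x)))
          + ln (Rabs (Gamma (- INR n + x)))
  <= x ^ 2 / (1 - x ^ 2) * (zeta2 + Zs n).
Proof.
  intros Hx.
  destruct (G_lim x ltac:(lra)) as [g1 [Hg1 H1]].
  destruct (G_lim (1-x) ltac:(lra)) as [g2 [Hg2 H2]].
  assert (Hz1 : forall k, - INR n + x + INR k <> 0).
  { intros k. destruct (Compare_dec.le_lt_dec n k) as [Hk|Hk].
    - apply le_INR in Hk. lra.
    - assert (Hk' : (S k <= n)%nat) by lia. apply le_INR in Hk'. rewrite S_INR in Hk'. lra. }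
  assert (Hz2 : forall k, - INR n - x + INR k <> 0).
  { intros k. destruct (Compare_dec.le_lt_dec k n) as [Hk|Hk].
    - apply le_INR in Hk. lra.
    - assert (Hk' : (S n <= k)%nat) by lia. apply le_INR in Hk'. rewrite S_INR in Hk'. lra. }
  assert (L1 := iter_lim n (- INR n + x) g1 Hz1
                  ltac:(replace (- INR n + x + INR n) with x by ring; exact H1)).
  assert (L2 := iter_lim (S n) (- INR n - x) g2 Hz2
                  ltac:(replace (- INR n - x + INR (S n)) with (1 - x) by (rewrite S_INR; ring); exact H2)).
  rewrite !Gamma_a.
  set (p1 := pr (- INR n + x) n) in *.
  set (p2 := pr (- INR n - x) (S n)) in *.
  rewrite (is_lim_seq_unique _ _ L1), (is_lim_seq_unique _ _ L2). simpl real.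
  assert (Hp1 : p1 <> 0) by (apply pr_nz, Hz1).
  assert (Hp2 : p2 <> 0) by (apply pr_nz, Hz2).
  assert (HP := prod_lemma n x). fold p1 p2 in HP.
  set (nf := INR (Factorial.fact n)) in *.
  assert (Hnf : 0 < nf) by (apply lt_0_INR, lt_O_fact).
  assert (HF := Fp_pos x n Hx).
  assert (HFb := Fp_bounds x n Hx).
  assert (HT := T_bounds x g1 g2 Hx H1 H2 Hg1 Hg2).
  assert (Hxnn : 0 < x * (nf * nf)) by (apply Rmult_lt_0_compat; [lra|apply Rmult_lt_0_compat; lra]).
  assert (Hg12 : 0 < g1 * g2) by (apply Rmult_lt_0_compat; lra).
  assert (HQ : ln (Rabs (g2 / p2)) + ln (Rabs (g1 / p1)) = ln (g1 * g2 / (x * (nf * nf) * Fp x n))).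
  { rewrite <- ln_mult by (apply Rabs_pos_lt; unfold Rdiv; apply Rmult_integral_contrapositive_currified;
                           [lra | apply Rinv_neq_0_compat; assumption]).
    rewrite <- Rabs_mult.
    replace (g2 / p2 * (g1 / p1)) with (- (g1 * g2 / (x * (nf * nf) * Fp x n))).
    2: { replace (x * (nf * nf) * Fp x n) with (- (p1 * p2)) by (rewrite HP; ring). field. auto. }
    rewrite Rabs_Ropp. rewrite Rabs_pos_eq. reflexivity.
    left. apply Rdiv_lt_0_compat. exact Hg12. apply Rmult_lt_0_compat; [exact Hxnn|exact HF]. }
  rewrite Rplus_assoc, HQ.
  rewrite ln_div by (repeat apply Rmult_lt_0_compat; lra).
  rewrite !ln_mult by (repeat apply Rmult_lt_0_compat; lra).
  rewrite !ln_mult in HT by (repeat apply Rmult_lt_0_compat; lra).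
  assert (Hx2 : 0 < 1 - x^2) by nra.
  replace (x ^ 2 / (1 - x ^ 2) * (zeta2 + Zs n)) with
     (x ^ 2 / (1 - x ^ 2) * zeta2 + x ^ 2 / (1 - x ^ 2) * Zs n) by ring.
  lra.
Qed.

Theorem mainTheorem4 (n : nat) :
  filterlim
    (fun x : R =>
       (2 * ln (INR (Factorial.fact n) * x) + ln (Rabs (Gamma (- INR n - x)))
          + ln (Rabs (Gamma (- INR n + x)))) / x ^ 2)
    (at_right 0)
    (locally (zeta2 + partial_zeta2 n)).
Proof.
  rewrite partial_Zs.
  set (L := zeta2 + Zs n).
  assert (HL : 0 <= L) by (unfold L; pose proof zeta2_nonneg; pose proof (Zs_nonneg n); lra).
  apply filterlim_locally. intros eps.
  assert (Hd : 0 < Rmin (1/2) (eps / (L + 1))).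
  { apply Rmin_pos. lra. apply Rdiv_lt_0_compat. apply cond_pos. lra. }
  exists (mkposreal _ Hd). intros y Hy Hy0.
  change (Rabs (y - 0) < Rmin (1/2) (eps / (L + 1))) in Hy.
  rewrite Rminus_0_r, Rabs_pos_eq in Hy by lra.
  assert (Hy1 : y < 1/2) by (eapply Rlt_le_trans; [exact Hy| apply Rmin_l]).
  assert (Hy2 : y < eps / (L+1)) by (eapply Rlt_le_trans; [exact Hy| apply Rmin_r]).
  destruct (E_bounds n y ltac:(lra)) as [B1 B2].
  fold L in B1, B2.
  set (E := 2 * ln (INR (Factorial.fact n) * y) + ln (Rabs (Gamma (- INR n - y)))
          + ln (Rabs (Gamma (- INR n + y)))) in *.
  change (Rabs (E / y ^ 2 - L) < eps).
  assert (Hy2p : 0 < y ^ 2) by nra.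
  set (q := E / y ^ 2).
  assert (Eq : E = q * y ^ 2) by (unfold q; field; lra).
  rewrite Eq in B1, B2.
  assert (Hq1 : L <= q).
  { apply Rmult_le_reg_r with (y^2). exact Hy2p. nra. }
  assert (H1y : 3/4 <= 1 - y ^ 2) by nra.
  set (r := y ^ 2 / (1 - y ^ 2)) in B2.
  assert (Hr : r <= 2 * y ^ 2) by (unfold r; apply Rle_trans with (y^2 / (3/4));
     [apply div_le_div; nra | unfold Rdiv; nra]).
  assert (Hq2 : q * y ^ 2 <= y ^ 2 * (L + 2 * y ^ 2 * L)).
  { assert (Er : r * L = y^2 * L + y^2 * (r * L)) by (unfold r; field; lra).
    assert (H5 : y^2 * (r*L) <= y^2 * (2*y^2*L)) by (apply Rmult_le_compat_l; [lra|apply Rmult_le_compat_r; lra]).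
    apply Rle_trans with (r * L). exact B2.
    rewrite Er.
    replace (y ^ 2 * (L + 2 * y ^ 2 * L)) with (y^2 * L + y^2 * (2*y^2*L)) by ring.
    apply Rplus_le_compat_l. exact H5. }
  assert (Hq3 : q <= L + 2 * y ^ 2 * L).
  { apply Rmult_le_reg_r with (y^2). exact Hy2p. nra. }
  rewrite Rabs_pos_eq by lra.
  assert (H2 : 2 * y ^ 2 * L <= y * L) by (apply Rmult_le_compat_r; nra).
  assert (H3 : y * L < eps).
  { apply Rle_lt_trans with (eps / (L+1) * L).
    apply Rmult_le_compat_r; lra.
    assert (0 < eps) by apply cond_pos.
    replace (eps / (L + 1) * L) with (eps - eps / (L+1)) by (field; lra).
    assert (0 < eps / (L+1)) by (apply Rdiv_lt_0_compat; lra). lra. }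
  lra.
Qed.
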